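(* Consider any execution of the reliable broadcast algorithm described in the context, with $n$ processes of which at most $f$ are Byzantine. At every point of the execution the following hold, where $\langle x\rangle_p$ denotes $x$ signed by $p$: (I1) If $\langle\langle ts,v\rangle_i,\sigma\rangle$, with $\sigma$ a set of $f+1$ signatures (of distinct processes) on $\langle ready,\langle ts,v\rangle_i\rangle$, appears in $deliver_j$ for some processes $i,j$, then $\langle ready,\langle ts,v\rangle_i\rangle_k\in ready_k$ for some correct process $k$. (I2) If $\langle ready,\langle ts,v\rangle_i\rangle_j\in ready_j$ for a correct process $j$, then $\langle ts,v\rangle_i\in echo_j$. (I3) If $\langle ready,\langle ts,v\rangle_i\rangle_j\in ready_j$ and $\langle ready,\langle ts,w\rangle_i\rangle_{j'}\in ready_{j'}$ for correct processes $j,j'$, then $v=w$. (I4) If $\langle\langle ts,v\rangle_i,\sigma\rangle\in deliver_j$ and $\langle\langle ts,w\rangle_i,\sigma'\rangle\in deliver_{j'}$ (with $\sigma,\sigma'$ sets of $f+1$ ready signatures as in (I1)) for correct processes $j,j'$, then $v=w$.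
   Context: Model: processes $\Pi=\{1,\dots,n\}$, asynchronous, communicating through reliable single-writer multi-reader (SWMR) registers. Up to $f$ processes are Byzantine (arbitrary behavior, may write arbitrary values to their own registers); correct processes follow the algorithm. PKI: $\langle x\rangle_p$ denotes $x$ signed by $p$, and signatures are unforgeable. Algorithm (code for process $i$): $i$ owns SWMR registers $send_i$, $echo_i$, $ready_i$, $deliver_i$ (the last three hold sets, initially empty; a correct process only adds elements to them). conflicting-echo$(\langle ts,v\rangle_j)$: reads all echo registers and returns true iff there exist $w\neq v$ and $k\in\Pi$ with $\langle ts,w\rangle_j\in echo_k$. broadcast$(ts,val)$: write $send_i\gets\langle ts,val\rangle_i$; then repeatedly call deliver$(i,ts)$ until it returns a value $\neq\bot$, and return. deliver$(j,ts)$: call refresh(); if there exist $k\in\Pi$ and $v$ such that $\langle\langle ts,v\rangle_j,\sigma\rangle\in deliver_k$ where $\sigma$ is a set of $f+1$ signatures of distinct processes on $\langle ready,\langle ts,v\rangle_j\rangle$, then add $\langle\langle ts,v\rangle_j,\sigma\rangle$ to $deliver_i$ and return $v$; otherwise return $\bot$. refresh(): for each $j\in[n]$: read $m\gets send_j$; if $m$ is not of the form $\langle ts,val\rangle_j$, skip to the next $j$; add $m$ (signed by $i$) to $echo_i$; if not conflicting-echo$(m)$, add $\langle ready,m\rangle_i$ to $ready_i$; if there is a set $S\subseteq\Pi$ with $|S|\geq f+1$ such that $\langle ready,m\rangle_l\in ready_l$ for all $l\in S$, and not conflicting-echo$(m)$ (re-reading all echo registers), then add $\langle m,\{\langle ready,m\rangle_l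 : l\in S\}\rangle$ to $deliver_i$. *)

(* Defs.v *)
From Stdlib Require Import List Arith.
Import ListNotations.
Set Implicit Arguments.

Section RB.

(* Type of broadcast values; timestamps are natural numbers.
   Processes are the natural numbers 0 .. n-1. *)
Variable V : Type.

(* Symbolic message terms.  MSig p x is <x>_p (x signed by p);
   MVal ts v is the pair <ts,v>; MReady x is <ready,x>;
   MDel x sigma is the deliver entry <x, sigma>; MJunk is any other value. *)
Inductive msg : Type :=
| MVal (ts : nat) (v : V)
| MSig (p : nat) (x : msg)
| MReady (x : msg)
| MDel (x : msg) (sigma : list msg)
| MJunk.

Definition sval (i ts : nat) (v : V) : msg := MSig i (MVal ts v).
Definition rdy (l : nat) (x : msg) : msg := MSig l (MReady x).

Inductive subterm : msg -> msg -> Prop :=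
| st_refl x : subterm x x
| st_sig y p x : subterm y x -> subterm y (MSig p x)
| st_ready y x : subterm y x -> subterm y (MReady x)
| st_del1 y x s : subterm y x -> subterm y (MDel x s)
| st_del2 y x s z : In z s -> subterm y z -> subterm y (MDel x s).

Record mem : Type := Mem {
  m_send : nat -> option msg;
  m_echo : nat -> list msg;
  m_ready : nat -> list msg;
  m_deliver : nat -> list msg }.

(* Code of a correct process, in continuation-passing style: every
   constructor is one atomic step (a single register read or write, or an
   internal nondeterministic choice / test). *)
Inductive prog : Type :=
| PDone (r : option V)
| PReadSend (j : nat) (k : option msg -> prog)
| PReadEcho (j : nat) (k : list msg -> prog)
| PReadReady (j : nat) (k : list msg -> prog)
| PReadDeliver (j : nat) (k : list msg -> prog)
| PWriteSend (x : msg) (k : prog)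
| PAddEcho (x : msg) (k : prog)
| PAddReady (x : msg) (k : prog)
| PAddDeliver (x : msg) (k : prog)
| PChoose (A : Type) (P : A -> Prop) (k : A -> prog).

Definition PIf (P : Prop) (p1 p2 : prog) : prog :=
  PChoose (fun b : bool => if b then P else ~ P) (fun b => if b then p1 else p2).

Definition upd {A : Type} (g : nat -> A) (i : nat) (a : A) : nat -> A :=
  fun j => if Nat.eqb j i then a else g j.

Fixpoint read_all (rd : nat -> (list msg -> prog) -> prog) (js : list nat)
  (k : (nat -> list msg) -> prog) : prog :=
  match js with
  | [] => k (fun _ => [])
  | j :: js' => rd j (fun e => read_all rd js' (fun s => k (upd s j e)))
  end.

Variables n f : nat.

Definition all_procs : list nat := seq 0 n.

Definition cert (x : msg) (sigma : list msg) : Prop :=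
  length sigma = f + 1 /\
  exists ls : list nat, NoDup ls /\ (forall l, In l ls -> l < n) /\
    sigma = map (fun l => rdy l x) ls.

(* conflicting-echo(x) evaluated on the collected echo registers snap
   (an element of echo_k is signed by its owner k). *)
Definition conflicting (x : msg) (snap : nat -> list msg) : Prop :=
  exists j ts v w k, x = sval j ts v /\ w <> v /\ k < n /\
    In (MSig k (sval j ts w)) (snap k).

Definition ready_quorum (x : msg) (rs : nat -> list msg) (Q : list nat) : Prop :=
  NoDup Q /\ f + 1 <= length Q /\
  (forall l, In l Q -> l < n /\ In (rdy l x) (rs l)).

(* Body of refresh() for one well-formed message x read from send_j. *)
Definition process_m (i : nat) (x : msg) (k : prog) : prog :=
  PAddEcho (MSig i x)
  (read_all PReadEcho all_procs (fun s1 =>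
    let rest :=
      read_all PReadReady all_procs (fun rs =>
      read_all PReadEcho all_procs (fun s2 =>
      PChoose (fun oS : option (list nat) =>
                 match oS with
                 | Some Q => ready_quorum x rs Q /\ ~ conflicting x s2
                 | None => ~ ((exists Q, ready_quorum x rs Q) /\ ~ conflicting x s2)
                 end)
        (fun oS => match oS with
                   | Some Q => PAddDeliver (MDel x (map (fun l => rdy l x) Q)) k
                   | None => k
                   end))) in
    PIf (conflicting x s1) rest (PAddReady (rdy i x) rest))).

Fixpoint refresh_loop (i : nat) (js : list nat) (k : prog) : prog :=
  match js with
  | [] => k
  | j :: js' =>
      PReadSend j (fun om =>
        PChoose (fun o : option (nat * V) =>
                   match o with
                   | Some (ts, v) => om = Some (sval j ts v)
                   | None => forall ts v, om <> Some (sval j ts v)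
                   end)
          (fun o => match o with
                    | Some (ts, v) => process_m i (sval j ts v) (refresh_loop i js' k)
                    | None => refresh_loop i js' k
                    end))
  end.

Definition refresh (i : nat) (k : prog) : prog := refresh_loop i all_procs k.

Definition deliver_op (i j ts : nat) : prog :=
  refresh i (read_all PReadDeliver all_procs (fun ds =>
    PChoose (fun o : option (msg * V) =>
               match o with
               | Some (e, v) => exists k sigma, k < n /\ e = MDel (sval j ts v) sigma /\
                                  In e (ds k) /\ cert (sval j ts v) sigma
               | None => ~ exists k v sigma, k < n /\ In (MDel (sval j ts v) sigma) (ds k)
                                  /\ cert (sval j ts v) sigma
               end)
      (fun o => match o with
                | Some (e, v) => PAddDeliver e (PDone (Some v))
                | None => PDone None
                end))).

(* broadcast(ts, val) by process i: the write of send_i, then the calls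
   deliver(i, ts) (repeated by the scheduler rules below). *)
Definition broadcast_op (i ts : nat) (val : V) : prog :=
  PWriteSend (sval i ts val) (deliver_op i i ts).

(* Global configuration: memory, the program counter of each process,
   whether the process is inside broadcast(ts,_) (Some ts), and the ghost
   list of all values ever written (what the adversary may have seen). *)
Record config : Type := Cfg {
  c_mem : mem;
  c_pc : nat -> prog;
  c_bc : nat -> option nat;
  c_seen : list msg }.

Variable B : list nat.

Definition correct (p : nat) : Prop := p < n /\ ~ In p B.

Definition unforgeable (seen : list msg) (x : msg) : Prop :=
  forall q y, subterm (MSig q y) x ->
    In q B \/ exists z, In z seen /\ subterm (MSig q y) z.

Definition set_send (M : mem) i o := Mem (upd (m_send M) i o) (m_echo M) (m_ready M) (m_deliver M).
Definition set_echo (M : mem) i s := Mem (m_send M) (upd (m_echo M) i s) (m_ready M) (m_deliver M).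
Definition set_ready (M : mem) i s := Mem (m_send M) (m_echo M) (upd (m_ready M) i s) (m_deliver M).
Definition set_deliver (M : mem) i s := Mem (m_send M) (m_echo M) (m_ready M) (upd (m_deliver M) i s).

Definition opt_list (o : option msg) : list msg :=
  match o with Some x => [x] | None => [] end.

Inductive step : config -> config -> Prop :=
| s_read_send C i j k : correct i -> c_pc C i = PReadSend j k ->
    step C (Cfg (c_mem C) (upd (c_pc C) i (k (m_send (c_mem C) j))) (c_bc C) (c_seen C))
| s_read_echo C i j k : correct i -> c_pc C i = PReadEcho j k ->
    step C (Cfg (c_mem C) (upd (c_pc C) i (k (m_echo (c_mem C) j))) (c_bc C) (c_seen C))
| s_read_ready C i j k : correct i -> c_pc C i = PReadReady j k ->
    step C (Cfg (c_mem C) (upd (c_pc C) i (k (m_ready (c_mem C) j))) (c_bc C) (c_seen C))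
| s_read_deliver C i j k : correct i -> c_pc C i = PReadDeliver j k ->
    step C (Cfg (c_mem C) (upd (c_pc C) i (k (m_deliver (c_mem C) j))) (c_bc C) (c_seen C))
| s_write_send C i x k : correct i -> c_pc C i = PWriteSend x k ->
    step C (Cfg (set_send (c_mem C) i (Some x)) (upd (c_pc C) i k) (c_bc C) (x :: c_seen C))
| s_add_echo C i x k : correct i -> c_pc C i = PAddEcho x k ->
    step C (Cfg (set_echo (c_mem C) i (x :: m_echo (c_mem C) i)) (upd (c_pc C) i k)
              (c_bc C) (x :: c_seen C))
| s_add_ready C i x k : correct i -> c_pc C i = PAddReady x k ->
    step C (Cfg (set_ready (c_mem C) i (x :: m_ready (c_mem C) i)) (upd (c_pc C) i k)
              (c_bc C) (x :: c_seen C))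
| s_add_deliver C i x k : correct i -> c_pc C i = PAddDeliver x k ->
    step C (Cfg (set_deliver (c_mem C) i (x :: m_deliver (c_mem C) i)) (upd (c_pc C) i k)
              (c_bc C) (x :: c_seen C))
| s_choose C i (A : Type) (P : A -> Prop) k (a : A) : correct i -> c_pc C i = PChoose P k ->
    P a -> step C (Cfg (c_mem C) (upd (c_pc C) i (k a)) (c_bc C) (c_seen C))
| s_invoke_broadcast C i r ts val : correct i -> c_pc C i = PDone r -> c_bc C i = None ->
    step C (Cfg (c_mem C) (upd (c_pc C) i (broadcast_op i ts val))
              (upd (c_bc C) i (Some ts)) (c_seen C))
| s_invoke_deliver C i r j ts : correct i -> c_pc C i = PDone r -> c_bc C i = None -> j < n ->
    step C (Cfg (c_mem C) (upd (c_pc C) i (deliver_op i j ts)) (c_bc C) (c_seen C))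
| s_bcast_retry C i ts : correct i -> c_pc C i = PDone None -> c_bc C i = Some ts ->
    step C (Cfg (c_mem C) (upd (c_pc C) i (deliver_op i i ts)) (c_bc C) (c_seen C))
| s_bcast_return C i ts v : correct i -> c_pc C i = PDone (Some v) -> c_bc C i = Some ts ->
    step C (Cfg (c_mem C) (c_pc C) (upd (c_bc C) i None) (c_seen C))
| s_byz_send C p o : In p B -> (forall x, o = Some x -> unforgeable (c_seen C) x) ->
    step C (Cfg (set_send (c_mem C) p o) (c_pc C) (c_bc C) (opt_list o ++ c_seen C))
| s_byz_echo C p s : In p B -> (forall x, In x s -> unforgeable (c_seen C) x) ->
    step C (Cfg (set_echo (c_mem C) p s) (c_pc C) (c_bc C) (s ++ c_seen C))
| s_byz_ready C p s : In p B -> (forall x, In x s -> unforgeable (c_seen C) x) ->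
    step C (Cfg (set_ready (c_mem C) p s) (c_pc C) (c_bc C) (s ++ c_seen C))
| s_byz_deliver C p s : In p B -> (forall x, In x s -> unforgeable (c_seen C) x) ->
    step C (Cfg (set_deliver (c_mem C) p s) (c_pc C) (c_bc C) (s ++ c_seen C)).

Definition init_config : config :=
  Cfg (Mem (fun _ => None) (fun _ => []) (fun _ => []) (fun _ => []))
      (fun _ => PDone None) (fun _ => None) [].

Inductive reachable : config -> Prop :=
| r_init : reachable init_config
| r_step C C' : reachable C -> step C C' -> reachable C'.

End RB.

(* Main.v *)
Require Import Defs.
From Stdlib Require Import List Arith Lia Classical.
From Stdlib Require Import Eqdep.
Import ListNotations.

Section Proof.
Variable V : Type.
Variables n f : nat.
Variable B : list nat.

Notation msg := (msg V).
Notation prog := (prog V).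
Notation config := (config V).

Definition Dch (dj dts : nat) (ds : nat -> list msg) : prog :=
    PChoose (fun o : option (msg * V) =>
               match o with
               | Some (e, v) => exists k sigma, k < n /\ e = MDel (sval dj dts v) sigma /\
                                  In e (ds k) /\ cert n f (sval dj dts v) sigma
               | None => ~ exists k v sigma, k < n /\ In (MDel (sval dj dts v) sigma) (ds k)
                                  /\ cert n f (sval dj dts v) sigma
               end)
      (fun o => match o with
                | Some (e, v) => PAddDeliver e (PDone (Some v))
                | None => PDone None
                end).

Definition Kdel dj dts : prog := read_all (@PReadDeliver V) (all_procs n) (Dch dj dts).

Lemma deliver_op_eq i j ts : deliver_op V n f i j ts = refresh_loop n f i (all_procs n) (Kdel j ts).
Proof. reflexivity. Qed.

Definition Ch (x : msg) (k : prog) (rs s2 : nat -> list msg) : prog :=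
      PChoose (fun oS : option (list nat) =>
                 match oS with
                 | Some Q => ready_quorum n f x rs Q /\ ~ conflicting n x s2
                 | None => ~ ((exists Q, ready_quorum n f x rs Q) /\ ~ conflicting n x s2)
                 end)
        (fun oS => match oS with
                   | Some Q => PAddDeliver (MDel x (map (fun l => rdy l x) Q)) k
                   | None => k
                   end).
Definition R2 x k rs : prog := read_all (@PReadEcho V) (all_procs n) (fun s2 => Ch x k rs s2).
Definition Rest x k : prog := read_all (@PReadReady V) (all_procs n) (fun rs => R2 x k rs).
Definition Fif p x k s1 : prog := PIf (conflicting n x s1) (Rest x k) (PAddReady (rdy p x) (Rest x k)).

Lemma process_m_eq p x k : process_m n f p x k =
  PAddEcho (MSig p x) (read_all (@PReadEcho V) (all_procs n) (fun s1 => Fif p x k s1)).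
Proof. reflexivity. Qed.

Definition Csend p j js K (om : option msg) : prog :=
        PChoose (fun o : option (nat * V) =>
                   match o with
                   | Some (ts, v) => om = Some (sval j ts v)
                   | None => forall ts v, om <> Some (sval j ts v)
                   end)
          (fun o => match o with
                    | Some (ts, v) => process_m n f p (sval j ts v) (refresh_loop n f p js K)
                    | None => refresh_loop n f p js K
                    end).

Lemma refresh_cons p j js K : refresh_loop n f p (j :: js) K = PReadSend j (Csend p j js K).
Proof. reflexivity. Qed.

Lemma choose_inv (A : Type) (P : A -> Prop) (k : A -> prog) (A' : Type) (P' : A' -> Prop) k' (a' : A') :
  PChoose P k = PChoose P' k' -> P' a' -> exists a : A, P a /\ k a = k' a'.
Proof.
  intros H Ha. inversion H. subst.
  repeat match goal with H : existT _ _ _ = existT _ _ _ |- _ => apply inj_pair2 in H end.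
  subst. eauto.
Qed.


Definition cont p js dj dts : prog := refresh_loop n f p js (Kdel dj dts).
Definition snapT := nat -> list msg.

Inductive phase : Type :=
| Ph_done (r : option V)
| Ph_send (ts : nat) (v : V)
| Ph_loop (j0 : nat) (js : list nat) (dj dts : nat)
| Ph_choose (j0 : nat) (js : list nat) (om : option msg) (dj dts : nat)
| Ph_echo (j ts : nat) (v : V) (js : list nat) (dj dts : nat)
| Ph_recho (j ts : nat) (v : V) (jsrem : list nat) (snap : snapT) (acc : snapT -> snapT) (js : list nat) (dj dts : nat)
| Ph_ready (j ts : nat) (v : V) (js : list nat) (dj dts : nat)
| Ph_rready (j ts : nat) (v : V) (j0 : nat) (jsr : list nat) (snap : snapT) (acc : snapT -> snapT) (js : list nat) (dj dts : nat)
| Ph_recho2 (j ts : nat) (v : V) (rs : snapT) (jsrem : list nat) (acc : snapT -> snapT) (js : list nat) (dj dts : nat)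
| Ph_adddel (j ts : nat) (v : V) (Q : list nat) (js : list nat) (dj dts : nat)
| Ph_rdel (jsrem : list nat) (snap : snapT) (acc : snapT -> snapT) (dj dts : nat)
| Ph_dadd (e : msg) (v : V).

Definition prog_of (p : nat) (ph : phase) : prog :=
  match ph with
  | Ph_done r => PDone r
  | Ph_send ts v => broadcast_op n f p ts v
  | Ph_loop j0 js dj dts => PReadSend j0 (Csend p j0 js (Kdel dj dts))
  | Ph_choose j0 js om dj dts => Csend p j0 js (Kdel dj dts) om
  | Ph_echo j ts v js dj dts => process_m n f p (sval j ts v) (cont p js dj dts)
  | Ph_recho j ts v jsrem snap acc js dj dts =>
      read_all (@PReadEcho V) jsrem (fun s => Fif p (sval j ts v) (cont p js dj dts) (acc s))
  | Ph_ready j ts v js dj dts => PAddReady (rdy p (sval j ts v)) (Rest (sval j ts v) (cont p js dj dts))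
  | Ph_rready j ts v j0 jsr snap acc js dj dts =>
      read_all (@PReadReady V) (j0 :: jsr) (fun rs => R2 (sval j ts v) (cont p js dj dts) (acc rs))
  | Ph_recho2 j ts v rs jsrem acc js dj dts =>
      read_all (@PReadEcho V) jsrem (fun s2 => Ch (sval j ts v) (cont p js dj dts) rs (acc s2))
  | Ph_adddel j ts v Q js dj dts =>
      PAddDeliver (MDel (sval j ts v) (map (fun l => rdy l (sval j ts v)) Q)) (cont p js dj dts)
  | Ph_rdel jsrem snap acc dj dts => read_all (@PReadDeliver V) jsrem (fun ds => Dch dj dts (acc ds))
  | Ph_dadd e v => PAddDeliver e (PDone (Some v))
  end.

Definition empty : snapT := fun _ => [].

Definition loop_ph js dj dts : phase :=
  match js with
  | [] => Ph_rdel (all_procs n) empty (fun s => s) dj dts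
  | j0 :: js' => Ph_loop j0 js' dj dts
  end.

Lemma loop_ph_prog p js dj dts : prog_of p (loop_ph js dj dts) = cont p js dj dts.
Proof. destruct js; reflexivity. Qed.

Definition rready_ph' L j ts v js dj dts : phase :=
  match L with
  | [] => Ph_recho2 j ts v empty (all_procs n) (fun s => s) js dj dts
  | j0 :: jr => Ph_rready j ts v j0 jr empty (fun s => s) js dj dts
  end.
Definition rready_ph := rready_ph' (all_procs n).

Lemma rready_ph_prog' L p j ts v js dj dts :
  prog_of p (rready_ph' L j ts v js dj dts) =
  read_all (@PReadReady V) L (fun rs => R2 (sval j ts v) (cont p js dj dts) rs).
Proof. destruct L; reflexivity. Qed.

Lemma rready_ph_prog p j ts v js dj dts :
  prog_of p (rready_ph j ts v js dj dts) = Rest (sval j ts v) (cont p js dj dts).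
Proof. apply rready_ph_prog'. Qed.

Definition rnext_ph j ts v jr snap acc js dj dts : phase :=
  match jr with
  | [] => Ph_recho2 j ts v (acc empty) (all_procs n) (fun s => s) js dj dts
  | j1 :: jr' => Ph_rready j ts v j1 jr' snap acc js dj dts
  end.

Lemma rnext_ph_prog p j ts v jr snap acc js dj dts :
  prog_of p (rnext_ph j ts v jr snap acc js dj dts) =
  read_all (@PReadReady V) jr (fun rs => R2 (sval j ts v) (cont p js dj dts) (acc rs)).
Proof. destruct jr; reflexivity. Qed.


Definition AccOK (jsrem : list nat) (snap : snapT) (acc : snapT -> snapT) : Prop :=
  NoDup jsrem /\ (forall s l, In l jsrem -> acc s l = s l) /\
  (forall s l, l < n -> ~ In l jsrem -> acc s l = snap l).

Definition cor := correct n B.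

Definition Local (C : config) (p : nat) (ph : phase) : Prop :=
  match ph with
  | Ph_recho j ts v jsrem snap acc _ _ _ =>
      In (MSig p (sval j ts v)) (m_echo (c_mem C) p) /\ AccOK jsrem snap acc
  | Ph_ready j ts v _ _ _ => In (MSig p (sval j ts v)) (m_echo (c_mem C) p)
  | Ph_rready j ts v j0 jsr snap acc _ _ _ =>
      AccOK (j0 :: jsr) snap acc /\
      (forall l y, cor l -> l < n -> ~ In l (j0 :: jsr) -> In y (snap l) -> In y (m_ready (c_mem C) l))
  | Ph_recho2 j ts v rs _ _ _ _ _ =>
      forall l y, cor l -> In y (rs l) -> In y (m_ready (c_mem C) l)
  | Ph_adddel j ts v Q _ _ _ =>
      forall l, cor l -> In l Q -> In (rdy l (sval j ts v)) (m_ready (c_mem C) l)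
  | Ph_rdel jsrem snap acc _ _ =>
      AccOK jsrem snap acc /\ (forall l y, l < n -> ~ In l jsrem -> In y (snap l) -> In y (c_seen C))
  | Ph_dadd e _ => In e (c_seen C)
  | _ => True
  end.

Definition noconf j ts (v : V) k (l : list msg) : Prop :=
  forall w, w <> v -> ~ In (MSig k (sval j ts w)) l.

Definition phclean (ph : phase) (x : msg) (k : nat) : Prop :=
  match ph with
  | Ph_recho j ts v jsrem snap _ _ _ _ => x = sval j ts v /\ ~ In k jsrem /\ noconf j ts v k (snap k)
  | Ph_ready j ts v _ _ _ => x = sval j ts v
  | _ => False
  end.

Definition Clean (C : config) (G : nat -> phase) p x k : Prop :=
  k < n /\ (In (rdy p x) (m_ready (c_mem C) p) \/ phclean (G p) x k).

Definition Pairwise C G : Prop := forall p q i ts (v w : V), cor p -> cor q -> v <> w ->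
  Clean C G p (sval i ts v) q -> Clean C G q (sval i ts w) p -> False.

Definition G1 (C : config) := forall q y, In y (m_deliver (c_mem C) q) -> In y (c_seen C).
Definition G2 (C : config) := forall k y z, cor k -> In z (c_seen C) -> subterm (rdy k y) z ->
  In (rdy k y) (m_ready (c_mem C) k).
Definition G3 (C : config) := forall k y, cor k -> In (rdy k y) (m_ready (c_mem C) k) ->
  In (MSig k y) (m_echo (c_mem C) k).

Definition INV C G : Prop :=
  (forall p, cor p -> c_pc C p = prog_of p (G p) /\ Local C p (G p)) /\
  G1 C /\ G2 C /\ G3 C /\ Pairwise C G.

Definition Mono (C C' : config) : Prop :=
  (forall l, cor l -> incl (m_echo (c_mem C) l) (m_echo (c_mem C') l) /\
                      incl (m_ready (c_mem C) l) (m_ready (c_mem C') l)) /\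
  incl (c_seen C) (c_seen C').

Lemma Local_mono C C' p ph : Mono C C' -> cor p -> Local C p ph -> Local C' p ph.
Proof.
  intros [Hm Hs] Hp. destruct ph; simpl; auto.
  - intros [H1 H2]. split; auto. apply (proj1 (Hm p Hp)); auto.
  - intros H1. apply (proj1 (Hm p Hp)); auto.
  - intros [H1 H2]. split; auto. intros. apply (proj2 (Hm l H)); eauto.
  - intros H l y Hl Hy. apply (proj2 (Hm l Hl)); eauto.
  - intros H l Hl HQ. apply (proj2 (Hm l Hl)); eauto.
  - intros [H1 H2]. split; auto. intros; apply Hs; eauto.
Qed.

Lemma upd_eq {A} (g : nat -> A) i a : upd g i a i = a.
Proof. unfold upd. rewrite Nat.eqb_refl. reflexivity. Qed.
Lemma upd_neq {A} (g : nat -> A) i a j : j <> i -> upd g i a j = g j.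
Proof. intros H. unfold upd. apply Nat.eqb_neq in H. rewrite H. reflexivity. Qed.

Lemma sval_inj i ts (v : V) i' ts' v' : sval i ts v = sval i' ts' v' -> i = i' /\ ts = ts' /\ v = v'.
Proof. intros H. injection H. auto. Qed.

Lemma CleanW C G p x k : INV C G -> cor p -> Clean C G p x k -> In (MSig p x) (m_echo (c_mem C) p).
Proof.
  intros (HL & _ & _ & H3 & _) Hp (_ & [Hr | Hc]).
  - apply H3; auto.
  - destruct (HL p Hp) as [_ Hl]. destruct (G p); simpl in Hc, Hl; try contradiction.
    + destruct Hc as [-> _]. tauto.
    + subst. auto.
Qed.

Lemma pair_gen (Cl Cl' : nat -> msg -> nat -> Prop) (E : nat -> msg -> Prop) p0 (Sp : msg -> nat -> Prop) :
  (forall p x k, cor p -> Cl p x k -> E p x) ->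
  (forall p q i ts v w, cor p -> cor q -> v <> w -> Cl p (sval i ts v) q -> Cl q (sval i ts w) p -> False) ->
  (forall p y k, cor p -> Cl' p y k -> Cl p y k \/ (p = p0 /\ Sp y k)) ->
  (forall y k, Sp y k -> exists j ts v, y = sval j ts v /\ forall w, w <> v -> ~ E k (sval j ts w)) ->
  (forall y y' k k', Sp y k -> Sp y' k' -> y = y') ->
  forall p q i ts v w, cor p -> cor q -> v <> w -> Cl' p (sval i ts v) q -> Cl' q (sval i ts w) p -> False.
Proof.
  intros HE Hold Hnew HS HS2 p q i ts v w Hp Hq Hvw H1 H2.
  destruct (Hnew _ _ _ Hp H1) as [O1 | [E1 S1]]; destruct (Hnew _ _ _ Hq H2) as [O2 | [E2 S2]].
  - eauto.
  - destruct (HS _ _ S2) as (j & ts' & v' & Heq & Hn). apply sval_inj in Heq as (-> & -> & ->).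
    apply (Hn v); auto. eapply HE; eauto.
  - destruct (HS _ _ S1) as (j & ts' & v' & Heq & Hn). apply sval_inj in Heq as (-> & -> & ->).
    apply (Hn w); auto. eapply HE; eauto.
  - pose proof (HS2 _ _ _ _ S1 S2) as Heq. apply sval_inj in Heq as (_ & _ & ->). auto.
Qed.

Lemma inv_local C C' G p ph' (Sp : msg -> nat -> Prop) :
  INV C G -> cor p -> Mono C C' ->
  (forall q, q <> p -> c_pc C' q = c_pc C q) -> c_pc C' p = prog_of p ph' ->
  (forall q, q <> p -> cor q -> m_ready (c_mem C') q = m_ready (c_mem C) q) ->
  Local C' p ph' -> G1 C' -> G2 C' -> G3 C' ->
  (forall y k, Clean C' (upd G p ph') p y k -> Clean C G p y k \/ Sp y k) ->
  (forall y k, Sp y k -> exists j ts v, y = sval j ts v /\ noconf j ts v k (m_echo (c_mem C) k)) ->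
  (forall y y' k k', Sp y k -> Sp y' k' -> y = y') ->
  INV C' (upd G p ph').
Proof.
  intros HI Hp HM Hpc Hpc' Hrd HL' H1 H2 H3 HCl HS HS2.
  pose proof HI as (HL & _ & _ & _ & HP).
  split; [|split; [|split; [|split]]]; auto.
  - intros q Hq. destruct (Nat.eq_dec q p) as [-> | Hne].
    + rewrite upd_eq. auto.
    + rewrite upd_neq by auto. rewrite Hpc by auto. destruct (HL q Hq) as [A1 A2].
      split; auto. eapply Local_mono; eauto.
  - intros p1 q1 i ts v w Hp1 Hq1 Hvw.
    eapply (pair_gen (Clean C G) (Clean C' (upd G p ph')) (fun k m => In (MSig k m) (m_echo (c_mem C) k)) p Sp);
      eauto.
    + intros. eapply CleanW; eauto.
    + intros p2 y k Hp2 Hc. destruct (Nat.eq_dec p2 p) as [-> | Hne].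
      * destruct (HCl _ _ Hc); auto.
      * left. unfold Clean in *. rewrite upd_neq in Hc by auto. rewrite Hrd in Hc; auto.
Qed.

Lemma sub_sval k y j ts (v : V) : subterm (rdy k y) (sval j ts v) -> False.
Proof.
  unfold rdy, sval. intros H. inversion H; subst.
  match goal with H0 : subterm _ (MVal _ _) |- _ => inversion H0 end.
Qed.

Lemma sub_echo k y p j ts (v : V) : subterm (rdy k y) (MSig p (sval j ts v)) -> False.
Proof.
  intros H. inversion H; subst. eapply sub_sval; eauto.
Qed.

Lemma sub_rdy k y l j ts (v : V) : subterm (rdy k y) (rdy l (sval j ts v)) -> k = l /\ y = sval j ts v.
Proof.
  unfold rdy. intros H. inversion H; subst; auto.
  match goal with H0 : subterm _ (MReady _) |- _ => inversion H0; subst end.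
    exfalso; eapply sub_sval; eauto.
Qed.

Lemma sub_del k y j ts (v : V) Q :
  subterm (rdy k y) (MDel (sval j ts v) (map (fun l => rdy l (sval j ts v)) Q)) -> In k Q /\ y = sval j ts v.
Proof.
  intros H. inversion H; subst.
  - exfalso; eapply sub_sval; eauto.
  - match goal with H0 : In _ (map _ _) |- _ => apply in_map_iff in H0 as (l & <- & Hl) end.
    match goal with H0 : subterm _ (rdy _ _) |- _ => apply sub_rdy in H0 as [-> ->] end. auto.
Qed.

Lemma in_all_procs l : l < n -> In l (all_procs n).
Proof. intros. unfold all_procs. apply in_seq. lia. Qed.

Lemma nodup_all : NoDup (all_procs n).
Proof. apply seq_NoDup. Qed.

Lemma accok_init : AccOK (all_procs n) empty (fun s => s).
Proof.
  split; [apply nodup_all|split]; auto.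
  intros s l Hl Hn. exfalso. apply Hn. apply in_all_procs; auto.
Qed.

Lemma acc_step j0 js snap acc (e : list msg) :
  AccOK (j0 :: js) snap acc -> AccOK js (upd snap j0 e) (fun s => acc (upd s j0 e)).
Proof.
  intros (HN & H1 & H2). inversion HN; subst. split; auto. split.
  - intros s l Hl. rewrite H1 by (right; auto). rewrite upd_neq; auto. intros ->. auto.
  - intros s l Hl Hn. destruct (Nat.eq_dec l j0) as [-> | Hne].
    + rewrite H1 by (left; auto). rewrite !upd_eq. auto.
    + rewrite H2; auto. rewrite upd_neq; auto. intros [-> | ?]; auto.
Qed.

Lemma cor_lt l : cor l -> l < n.
Proof. intros [H _]. auto. Qed.

Lemma Local_loop_ph C p js dj dts : Local C p (loop_ph js dj dts).
Proof.
  destruct js; simpl; auto. split; [apply accok_init|].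
  intros l y Hl Hn. exfalso. apply Hn. apply in_all_procs; auto.
Qed.

Lemma Local_rready_ph C p j ts v js dj dts : Local C p (rready_ph j ts v js dj dts).
Proof.
  unfold rready_ph, rready_ph'. pose proof accok_init as HA.
  pose proof (in_all_procs) as Hin.
  destruct (all_procs n) as [|a l]; simpl.
  - intros l y _ [].
  - split; [exact HA|]. intros l0 y _ _ _ [].
Qed.

Lemma phclean_loop js dj dts y k : phclean (loop_ph js dj dts) y k -> False.
Proof. destruct js; simpl; auto. Qed.

Lemma phclean_rready j ts v js dj dts y k : phclean (rready_ph j ts v js dj dts) y k -> False.
Proof. unfold rready_ph, rready_ph'. destruct (all_procs n); simpl; auto. Qed.

Lemma phclean_rnext j ts v jr snap acc js dj dts y k : phclean (rnext_ph j ts v jr snap acc js dj dts) y k -> False.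
Proof. destruct jr; simpl; auto. Qed.

Lemma incl_upd_cons (g : nat -> list msg) i x l : incl (g l) (upd g i (x :: g i) l).
Proof. unfold upd. destruct (Nat.eqb l i) eqn:E; [apply Nat.eqb_eq in E; subst; apply incl_tl|]; apply incl_refl. Qed.

Lemma step_mono C C' : step n f B C C' -> Mono C C'.
Proof.
  intros Hst. destruct Hst; split; simpl; try (intros; split; apply incl_refl); try apply incl_refl;
    try apply incl_tl; try apply incl_refl; try apply incl_appr; try apply incl_refl;
    try (intros l Hl; split; first [apply incl_refl | apply incl_upd_cons]);
    try (intros l Hl; split; unfold upd; destruct (Nat.eqb l p) eqn:E; try apply incl_refl;
         apply Nat.eqb_eq in E; subst; destruct Hl; contradiction).
  all: try (destruct o; simpl; [apply incl_tl|]; apply incl_refl).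
Qed.

Lemma inv_nomem_sp C G i prg bc ph' (Sp : msg -> nat -> Prop) :
  INV C G -> cor i -> prg = prog_of i ph' -> Local C i ph' ->
  (forall y k, k < n -> phclean ph' y k -> phclean (G i) y k \/ Sp y k) ->
  (forall y k, Sp y k -> exists j ts v, y = sval j ts v /\ noconf j ts v k (m_echo (c_mem C) k)) ->
  (forall y y' k k', Sp y k -> Sp y' k' -> y = y') ->
  INV (Cfg (c_mem C) (upd (c_pc C) i prg) bc (c_seen C)) (upd G i ph').
Proof.
  intros HI Hi Hprg HLoc Hcl HS HS2. pose proof HI as (HL & H1 & H2 & H3 & HP).
  apply (inv_local C _ G i ph' Sp); simpl; auto.
  - split; intros; [split|]; apply incl_refl.
  - intros q Hq. rewrite upd_neq; auto.
  - rewrite upd_eq. auto.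
  - intros y k (Hk & [Hr | Hc]).
    + left. split; auto.
    + rewrite upd_eq in Hc. destruct (Hcl y k Hk Hc); auto. left; split; auto.
Qed.

Lemma inv_nomem C G i prg bc ph' :
  INV C G -> cor i -> prg = prog_of i ph' -> Local C i ph' ->
  (forall y k, k < n -> phclean ph' y k -> phclean (G i) y k) ->
  INV (Cfg (c_mem C) (upd (c_pc C) i prg) bc (c_seen C)) (upd G i ph').
Proof.
  intros HI Hi Hprg HLoc Hcl.
  apply (inv_nomem_sp C G i prg bc ph' (fun _ _ => False)); auto.
  - intros; contradiction.
  - intros; contradiction.
Qed.

Lemma inv_byz C C' G : INV C G -> Mono C C' -> c_pc C' = c_pc C ->
  (forall q, cor q -> m_ready (c_mem C') q = m_ready (c_mem C) q /\ m_echo (c_mem C') q = m_echo (c_mem C) q) ->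
  G1 C' -> G2 C' -> INV C' G.
Proof.
  intros (HL & H1 & H2 & H3 & HP) HM Hpc Hq G1' G2'.
  split; [|split; [|split; [|split]]]; auto.
  - intros p Hp. rewrite Hpc. destruct (HL p Hp). split; auto. eapply Local_mono; eauto.
  - intros k y Hk. destruct (Hq k Hk) as [-> ->]. auto.
  - intros p q i ts v w Hp Hq' Hvw. unfold Clean.
    destruct (Hq p Hp) as [-> _]. destruct (Hq q Hq') as [-> _]. apply HP; auto.
Qed.

Lemma cor_notB p q : cor p -> In q B -> p <> q.
Proof. intros [_ H] Hq ->. auto. Qed.

Lemma byz_G2 C (s : list msg) :
  G2 C -> (forall x, In x s -> unforgeable B (c_seen C) x) ->
  forall k y z, cor k -> In z (s ++ c_seen C) -> subterm (rdy k y) z -> In (rdy k y) (m_ready (c_mem C) k).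
Proof.
  intros H2 Hu k y z Hk Hz Hs. apply in_app_or in Hz as [Hz | Hz]; [|eapply H2; eauto].
  destruct (Hu z Hz k (MReady y) Hs) as [HB | (z' & Hz' & Hs')].
  - destruct Hk; contradiction.
  - eapply H2; eauto.
Qed.

Lemma Local_rnext C i a b c j0 jr snap acc js dj dts :
  AccOK (j0 :: jr) snap acc ->
  (forall l y, cor l -> l < n -> ~ In l (j0 :: jr) -> In y (snap l) -> In y (m_ready (c_mem C) l)) ->
  Local C i (rnext_ph a b c jr (upd snap j0 (m_ready (c_mem C) j0))
                      (fun s => acc (upd s j0 (m_ready (c_mem C) j0))) js dj dts).
Proof.
  intros HA Hs. pose proof (acc_step _ _ _ _ (m_ready (c_mem C) j0) HA) as HA'.
  assert (Hs' : forall l y, cor l -> l < n -> ~ In l jr ->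
            In y (upd snap j0 (m_ready (c_mem C) j0) l) -> In y (m_ready (c_mem C) l)).
  { intros l y Hl Hn Hnin Hy. destruct (Nat.eq_dec l j0) as [-> | Hne].
    - rewrite upd_eq in Hy. auto.
    - rewrite upd_neq in Hy by auto. apply (Hs l y); auto. intros [-> | ?]; auto. }
  destruct jr as [|j1 jr']; simpl.
  - intros l y Hl Hy. destruct HA' as (_ & _ & H3'). rewrite H3' in Hy; [| apply cor_lt; auto | simpl; auto].
    apply Hs' in Hy; auto. apply cor_lt; auto.
  - split; auto.
Qed.

Lemma rdy_inj k (x y : msg) : rdy k x = rdy k y -> x = y.
Proof. intros H. injection H. auto. Qed.

Ltac phcase G i Hi Hpc HL :=
  let Epc := fresh "Epc" in let Loc := fresh "Loc" in
  destruct (HL i Hi) as [Epc Loc]; rewrite Epc in Hpc;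
  destruct (G i) as [r0|ts0 v0|j0 js dj dts|j0 js om dj dts|a b c js dj dts
                    |a b c [|j0 jr] snap acc js dj dts|a b c js dj dts|a b c j0 jr snap acc js dj dts
                    |a b c rs [|j0 jr] acc js dj dts|a b c Q js dj dts|[|j0 jr] snap acc dj dts|e0 v0] eqn:EG;
  simpl in Loc; try discriminate Hpc.

Lemma inv_step C C' G : INV C G -> step n f B C C' -> exists G', INV C' G'.
Proof.
  intros HI Hst. pose proof (step_mono C C' Hst) as HM. revert HI HM.
  destruct Hst as [C i j kc Hi Hpc|C i j kc Hi Hpc|C i j kc Hi Hpc|C i j kc Hi Hpc
    |C i x kc Hi Hpc|C i x kc Hi Hpc|C i x kc Hi Hpc|C i x kc Hi Hpc
    |C i A P kc a0 Hi Hpc HPa|C i r ts val Hi Hpc Hbc|C i r j ts Hi Hpc Hbc Hj|C i ts Hi Hpc Hbc|C i ts v Hi Hpc Hbc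
    |C p o Hp Hu|C p s Hp Hu|C p s Hp Hu|C p s Hp Hu]; intros HI HM;
    pose proof HI as (HL & H1 & H2 & H3 & HP).
  -
    phcase G i Hi Hpc HL.
    simpl in Hpc. injection Hpc as <- <-.
    eexists. apply inv_nomem with (G := G) (ph' := Ph_choose j0 js (m_send (c_mem C) j0) dj dts); auto.
    all: simpl; auto; intros; contradiction.
  -
    phcase G i Hi Hpc HL.
    + simpl in Hpc. injection Hpc as <- <-.
      eexists. apply inv_nomem_sp with (G := G)
        (ph' := Ph_recho a b c jr (upd snap j0 (m_echo (c_mem C) j0))
                  (fun s => acc (upd s j0 (m_echo (c_mem C) j0))) js dj dts)
        (Sp := fun y k => y = sval a b c /\ noconf a b c k (m_echo (c_mem C) k) /\ k = j0); auto.
      * simpl. split; [tauto | apply acc_step; tauto].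
      * intros y k Hk (Hy & Hn & Hnc). destruct (Nat.eq_dec k j0) as [-> | Hne].
        -- right. rewrite upd_eq in Hnc. auto.
        -- left. rewrite EG. simpl. rewrite upd_neq in Hnc by auto. split; auto. split; auto.
           intros [-> | ?]; auto.
      * intros y k (-> & Hn & ->). exists a, b, c. auto.
      * intros y y' k k' (-> & _) (-> & _). reflexivity.
    + simpl in Hpc. injection Hpc as <- <-.
      eexists. apply inv_nomem with (G := G)
        (ph' := Ph_recho2 a b c rs jr (fun s => acc (upd s j0 (m_echo (c_mem C) j0))) js dj dts); auto.
      all: simpl; auto; intros; contradiction.
  -
    phcase G i Hi Hpc HL.
    simpl in Hpc. injection Hpc as <- <-.
    eexists. apply inv_nomem with (G := G)
      (ph' := rnext_ph a b c jr (upd snap j0 (m_ready (c_mem C) j0))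
                (fun s => acc (upd s j0 (m_ready (c_mem C) j0))) js dj dts); auto.
    + rewrite rnext_ph_prog. reflexivity.
    + destruct Loc. apply Local_rnext; auto.
    + intros y k _ Hc. exfalso. eapply phclean_rnext; eauto.
  -
    phcase G i Hi Hpc HL.
    simpl in Hpc. injection Hpc as <- <-.
    eexists. apply inv_nomem with (G := G)
      (ph' := Ph_rdel jr (upd snap j0 (m_deliver (c_mem C) j0))
                (fun s => acc (upd s j0 (m_deliver (c_mem C) j0))) dj dts); auto.
    + simpl. destruct Loc as [HA Hs]. split; [apply acc_step; auto|].
      intros l y Hl Hn Hy. destruct (Nat.eq_dec l j0) as [-> | Hne].
      * rewrite upd_eq in Hy. eapply H1; eauto.
      * rewrite upd_neq in Hy by auto. apply (Hs l y); auto. intros [-> | ?]; auto.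
    + all: simpl; auto; intros; contradiction.
  -
    phcase G i Hi Hpc HL.
    simpl in Hpc. injection Hpc as <- <-.
    eexists. apply (inv_local C _ G i (loop_ph (all_procs n) i ts0) (fun _ _ => False)); simpl; auto.
    + intros q Hq. rewrite upd_neq; auto.
    + rewrite upd_eq, loop_ph_prog. reflexivity.
    + apply Local_loop_ph.
    + intros q y Hy. right. eapply H1; eauto.
    + intros k y z Hk [<- | Hz] Hs; [exfalso; eapply sub_sval; eauto | eapply H2; eauto].
    + intros y k (Hk & [Hr | Hc]); [left; split; auto|]. rewrite upd_eq in Hc.
      exfalso; eapply phclean_loop; eauto.
    + intros; contradiction.
    + intros; contradiction.
  -
    phcase G i Hi Hpc HL.
    simpl in Hpc. injection Hpc as <- <-.
    eexists. apply (inv_local C _ G i (Ph_recho a b c (all_procs n) empty (fun s => s) js dj dts)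
                     (fun _ _ => False)); simpl; auto.
    + intros q Hq. rewrite upd_neq; auto.
    + rewrite upd_eq. reflexivity.
    + split; [rewrite upd_eq; left; auto | apply accok_init].
    + intros q y Hy. right. eapply H1; eauto.
    + intros k y z Hk [<- | Hz] Hs; [exfalso; eapply sub_echo; eauto | eapply H2; eauto].
    + intros k y Hk Hr. simpl. apply incl_upd_cons. apply H3; auto.
    + intros y k (Hk & [Hr | Hc]); [left; split; auto|]. rewrite upd_eq in Hc.
      simpl in Hc. exfalso. apply (proj1 (proj2 Hc)). apply in_all_procs; auto.
    + intros; contradiction.
    + intros; contradiction.
  -
    phcase G i Hi Hpc HL.
    simpl in Hpc. injection Hpc as <- <-.
    eexists. apply (inv_local C _ G i (rready_ph a b c js dj dts) (fun _ _ => False)); simpl; auto.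
    + intros q Hq. rewrite upd_neq; auto.
    + rewrite upd_eq, rready_ph_prog. reflexivity.
    + intros q Hq _. rewrite upd_neq; auto.
    + apply Local_rready_ph.
    + intros q y Hy. right. eapply H1; eauto.
    + intros k y z Hk [<- | Hz] Hs.
      * apply sub_rdy in Hs as [-> ->]. simpl. rewrite upd_eq. left; auto.
      * simpl. apply incl_upd_cons. eapply H2; eauto.
    + intros k y Hk Hr. simpl in Hr |- *. destruct (Nat.eq_dec k i) as [-> | Hne].
      * rewrite upd_eq in Hr. destruct Hr as [E | Hr].
        -- apply rdy_inj in E. subst. auto.
        -- auto.
      * rewrite upd_neq in Hr by auto. auto.
    + intros y k (Hk & [Hr | Hc]).
      * simpl in Hr. rewrite upd_eq in Hr. destruct Hr as [E | Hr].
        -- apply rdy_inj in E. subst. left. split; auto. right. rewrite EG. simpl. reflexivity.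
        -- left. split; auto.
      * rewrite upd_eq in Hc. exfalso; eapply phclean_rready; eauto.
    + intros; contradiction.
    + intros; contradiction.
  -
    phcase G i Hi Hpc HL.
    + simpl in Hpc. injection Hpc as <- <-.
      eexists. apply (inv_local C _ G i (loop_ph js dj dts) (fun _ _ => False)); simpl; auto.
      * intros q Hq. rewrite upd_neq; auto.
      * rewrite upd_eq, loop_ph_prog. reflexivity.
      * apply Local_loop_ph.
      * intros q y Hy. simpl in Hy |- *. destruct (Nat.eq_dec q i) as [-> | Hne].
        -- rewrite upd_eq in Hy. destruct Hy as [<- | Hy]; [left; auto | right; eapply H1; eauto].
        -- rewrite upd_neq in Hy by auto. right; eapply H1; eauto.
      * intros k y z Hk [<- | Hz] Hs.
        -- apply sub_del in Hs as [HQ ->]. apply Loc; auto.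
        -- eapply H2; eauto.
      * intros y k (Hk & [Hr | Hc]); [left; split; auto|]. rewrite upd_eq in Hc.
        exfalso; eapply phclean_loop; eauto.
      * intros; contradiction.
      * intros; contradiction.
    + simpl in Hpc. injection Hpc as <- <-.
      eexists. apply (inv_local C _ G i (Ph_done (Some v0)) (fun _ _ => False)); simpl; auto.
      * intros q Hq. rewrite upd_neq; auto.
      * rewrite upd_eq. reflexivity.
      * intros q y Hy. simpl in Hy |- *. destruct (Nat.eq_dec q i) as [-> | Hne].
        -- rewrite upd_eq in Hy. destruct Hy as [<- | Hy]; [left; auto | right; eapply H1; eauto].
        -- rewrite upd_neq in Hy by auto. right; eapply H1; eauto.
      * intros k y z Hk [<- | Hz] Hs; eapply H2; eauto.
      * intros y k (Hk & [Hr | Hc]); [left; split; auto|]. rewrite upd_eq in Hc. contradiction.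
      * intros; contradiction.
      * intros; contradiction.
  -
    phcase G i Hi Hpc HL.
    + simpl in Hpc. unfold Csend in Hpc.
      destruct (choose_inv _ _ _ _ _ _ _ Hpc HPa) as (ch & Hch & Ek). rewrite <- Ek.
      destruct ch as [[ts1 v1]|].
      * eexists. apply inv_nomem with (G := G) (ph' := Ph_echo j0 ts1 v1 js dj dts); auto.
        all: simpl; auto; intros; contradiction.
      * eexists. apply inv_nomem with (G := G) (ph' := loop_ph js dj dts); auto.
        -- rewrite loop_ph_prog. reflexivity.
        -- apply Local_loop_ph.
        -- intros y k _ Hc. exfalso; eapply phclean_loop; eauto.
    + simpl in Hpc. unfold Fif, PIf in Hpc.
      destruct (choose_inv _ _ _ _ _ _ _ Hpc HPa) as (ch & Hch & Ek). rewrite <- Ek.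
      destruct ch.
      * eexists. apply inv_nomem with (G := G) (ph' := rready_ph a b c js dj dts); auto.
        -- rewrite rready_ph_prog. reflexivity.
        -- apply Local_rready_ph.
        -- intros y k _ Hc. exfalso; eapply phclean_rready; eauto.
      * eexists. apply inv_nomem with (G := G) (ph' := Ph_ready a b c js dj dts); auto.
        -- simpl. tauto.
        -- intros y k Hk Hy. simpl in Hy. subst y. rewrite EG. simpl.
           destruct Loc as (_ & _ & _ & HA). split; auto. split; auto.
           intros w Hw Hin. apply Hch. exists a, b, c, w, k.
           split; auto. split; auto. split; auto. rewrite HA; auto.
    + simpl in Hpc. unfold Ch in Hpc.
      destruct (choose_inv _ _ _ _ _ _ _ Hpc HPa) as (ch & Hch & Ek). rewrite <- Ek.
      destruct ch as [Q|].
      * eexists. apply inv_nomem with (G := G) (ph' := Ph_adddel a b c Q js dj dts); auto.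
        -- simpl. intros l Hl HQ. destruct Hch as ((_ & _ & Hq) & _).
           destruct (Hq l HQ) as [_ Hr]. eapply Loc; eauto.
        -- all: simpl; auto; intros; contradiction.
      * eexists. apply inv_nomem with (G := G) (ph' := loop_ph js dj dts); auto.
        -- rewrite loop_ph_prog. reflexivity.
        -- apply Local_loop_ph.
        -- intros y k _ Hc. exfalso; eapply phclean_loop; eauto.
    + simpl in Hpc. unfold Dch in Hpc.
      destruct (choose_inv _ _ _ _ _ _ _ Hpc HPa) as (ch & Hch & Ek). rewrite <- Ek.
      destruct ch as [[e1 v1]|].
      * eexists. apply inv_nomem with (G := G) (ph' := Ph_dadd e1 v1); auto.
        -- simpl. destruct Hch as (k & sigma & Hk & He & Hin & _).
           destruct Loc as ((_ & _ & HA) & Hs). rewrite HA in Hin; auto.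
           eapply Hs; eauto.
        -- all: simpl; auto; intros; contradiction.
      * eexists. apply inv_nomem with (G := G) (ph' := Ph_done None); auto.
        all: simpl; auto; intros; contradiction.
  -
    phcase G i Hi Hpc HL.
    eexists. apply inv_nomem with (G := G) (ph' := Ph_send ts val); auto.
    all: simpl; auto; intros; contradiction.
  -
    phcase G i Hi Hpc HL.
    eexists. apply inv_nomem with (G := G) (ph' := loop_ph (all_procs n) j ts); auto.
    + rewrite loop_ph_prog. reflexivity.
    + apply Local_loop_ph.
    + intros y k _ Hc. exfalso; eapply phclean_loop; eauto.
  -
    phcase G i Hi Hpc HL.
    eexists. apply inv_nomem with (G := G) (ph' := loop_ph (all_procs n) i ts); auto.
    + rewrite loop_ph_prog. reflexivity.
    + apply Local_loop_ph.
    + intros y k _ Hc. exfalso; eapply phclean_loop; eauto.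
  -
    exists G. exact HI.
  -
    exists G. apply (inv_byz C); auto.
    + intros q y Hy. simpl. apply in_or_app. right. eapply H1; eauto.
    + intros k y z Hk Hz Hs. simpl.
      eapply (byz_G2 C (opt_list o)); eauto.
      destruct o; simpl; intros x0 Hx; [destruct Hx as [<- | []]; apply Hu; auto | contradiction].
  -
    exists G. apply (inv_byz C); auto.
    + intros q Hq. simpl. rewrite upd_neq; [auto | eapply cor_notB; eauto].
    + intros q y Hy. simpl. apply in_or_app. right. eapply H1; eauto.
    + intros k y z Hk Hz Hs. simpl. eapply (byz_G2 C s); eauto.
  -
    exists G. apply (inv_byz C); auto.
    + intros q Hq. simpl. rewrite upd_neq; [auto | eapply cor_notB; eauto].
    + intros q y Hy. simpl. apply in_or_app. right. eapply H1; eauto.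
    + intros k y z Hk Hz Hs. simpl. rewrite upd_neq; [|eapply cor_notB; eauto].
      eapply (byz_G2 C s); eauto.
  -
    exists G. apply (inv_byz C); auto.
    + intros q y Hy. simpl in Hy |- *. apply in_or_app.
      destruct (Nat.eq_dec q p) as [-> | Hne].
      * rewrite upd_eq in Hy. left; auto.
      * rewrite upd_neq in Hy by auto. right. eapply H1; eauto.
    + intros k y z Hk Hz Hs. simpl. eapply (byz_G2 C s); eauto.
Qed.

Lemma inv_reach C : reachable n f B C -> exists G, INV C G.
Proof.
  intros Hr. induction Hr as [|C C' Hr IH Hst].
  - exists (fun _ => Ph_done None).
    split; [|split; [|split; [|split]]]; simpl.
    + intros p _. split; auto.
    + intros q y [].
    + intros k y z _ [].
    + intros k y _ [].
    + intros p q i ts v w _ _ _ (_ & [[] | []]).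
  - destruct IH as [G HG]. eapply inv_step; eauto.
Qed.

Lemma I1_of C G : length B <= f -> INV C G ->
  forall i j ts (v : V) sigma,
      In (MDel (sval i ts v) sigma) (m_deliver (c_mem C) j) ->
      cert n f (sval i ts v) sigma ->
      exists k, correct n B k /\ In (rdy k (sval i ts v)) (m_ready (c_mem C) k).
Proof.
  intros HB (HL & H1 & H2 & H3 & HP) i j ts v sigma Hin (Hlen & ls & Hnd & Hlt & Hs).
  destruct (classic (exists l, In l ls /\ ~ In l B)) as [(l & Hl & HlB) | Hno].
  - exists l. assert (Hc : cor l) by (split; auto).
    split; auto. eapply H2; eauto. subst sigma.
    eapply st_del2; [apply in_map; eauto | apply st_refl].
  - exfalso. assert (Hincl : incl ls B).
    { intros l Hl. destruct (classic (In l B)); auto. exfalso; apply Hno; eauto. }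
    pose proof (NoDup_incl_length Hnd Hincl). subst sigma. rewrite length_map in Hlen. lia.
Qed.

Lemma final C : length B <= f -> reachable n f B C ->
  let M := c_mem C in
  (forall i j ts (v : V) sigma,
      i < n -> j < n ->
      In (MDel (sval i ts v) sigma) (m_deliver M j) ->
      cert n f (sval i ts v) sigma ->
      exists k, correct n B k /\ In (rdy k (sval i ts v)) (m_ready M k)) /\
  (forall i j ts (v : V),
      correct n B j ->
      In (rdy j (sval i ts v)) (m_ready M j) ->
      In (MSig j (sval i ts v)) (m_echo M j)) /\
  (forall i j j' ts (v w : V),
      correct n B j -> correct n B j' ->
      In (rdy j (sval i ts v)) (m_ready M j) ->
      In (rdy j' (sval i ts w)) (m_ready M j') ->
      v = w) /\
  (forall i j j' ts (v w : V) sigma sigma',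
      correct n B j -> correct n B j' ->
      In (MDel (sval i ts v) sigma) (m_deliver M j) -> cert n f (sval i ts v) sigma ->
      In (MDel (sval i ts w) sigma') (m_deliver M j') -> cert n f (sval i ts w) sigma' ->
      v = w).
Proof.
  intros HB Hr. destruct (inv_reach C Hr) as [G HI].
  pose proof HI as (HL & H1 & H2 & H3 & HP).
  assert (I3 : forall i j j' ts (v w : V),
      correct n B j -> correct n B j' ->
      In (rdy j (sval i ts v)) (m_ready (c_mem C) j) ->
      In (rdy j' (sval i ts w)) (m_ready (c_mem C) j') -> v = w).
  { intros i j j' ts v w Hj Hj' Hr1 Hr2. destruct (classic (v = w)) as [E | Hne]; auto.
    exfalso. apply (HP j j' i ts v w); auto.
    - split; [apply cor_lt; auto | left; auto].
    - split; [apply cor_lt; auto | left; auto]. }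
  simpl. split; [|split; [|split]].
  - intros i j ts v sigma _ _. eapply I1_of; eauto.
  - intros i j ts v Hj Hr'. apply H3; auto.
  - exact I3.
  - intros i j j' ts v w sigma sigma' _ _ Hd1 Hc1 Hd2 Hc2.
    destruct (I1_of C G HB HI _ _ _ _ _ Hd1 Hc1) as (k1 & Hk1 & Hr1).
    destruct (I1_of C G HB HI _ _ _ _ _ Hd2 Hc2) as (k2 & Hk2 & Hr2).
    exact (I3 i k1 k2 ts v w Hk1 Hk2 Hr1 Hr2).
Qed.

End Proof.

Theorem lemma6p3 (V : Type) (n f : nat) (B : list nat) (C : config V) :
  NoDup B -> length B <= f ->
  reachable n f B C ->
  let M := c_mem C in
  (* (I1) *)
  (forall i j ts (v : V) sigma,
      i < n -> j < n ->
      In (MDel (sval i ts v) sigma) (m_deliver M j) ->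
      cert n f (sval i ts v) sigma ->
      exists k, correct n B k /\ In (rdy k (sval i ts v)) (m_ready M k)) /\
  (* (I2) *)
  (forall i j ts (v : V),
      correct n B j ->
      In (rdy j (sval i ts v)) (m_ready M j) ->
      In (MSig j (sval i ts v)) (m_echo M j)) /\
  (* (I3) *)
  (forall i j j' ts (v w : V),
      correct n B j -> correct n B j' ->
      In (rdy j (sval i ts v)) (m_ready M j) ->
      In (rdy j' (sval i ts w)) (m_ready M j') ->
      v = w) /\
  (* (I4) *)
  (forall i j j' ts (v w : V) sigma sigma',
      correct n B j -> correct n B j' ->
      In (MDel (sval i ts v) sigma) (m_deliver M j) -> cert n f (sval i ts v) sigma ->
      In (MDel (sval i ts w) sigma') (m_deliver M j') -> cert n f (sval i ts w) sigma' ->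
      v = w).
Proof.
  intros _ HB Hr. exact (final V n f B C HB Hr).
Qed.
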